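(* CTL*$_{cd}$ is strictly more expressive than CTL* and is incomparable with the modal $\mu$-calculus. Precisely: (1) every CTL* state formula is a CTL*$_{cd}$ state formula, and there is a CTL*$_{cd}$ state formula $\varphi$ such that no CTL* state formula $\chi$ satisfies ($\mathcal K\models\varphi\iff\mathcal K\models\chi$) for all Kripke structures $\mathcal K$; (2) there is a CTL*$_{cd}$ state formula not equivalent (over all Kripke structures, evaluated at the initial world) to any modal $\mu$-calculus formula; (3) there is a modal $\mu$-calculus formula (e.g. $\nu x.\,(p\wedge\Box\Box x)$) not equivalent (over all Kripke structures, evaluated at the initial world) to any CTL*$_{cd}$ state formula.
   Context: A Kripke structure over a finite set $AP$ of atomic propositions is a tuple $\mathcal K=(AP,W,R,L,w_I)$ where $W$ is a countable non-empty set of worlds, $w_I\in W$ is the initial world, $R\subseteq W\times W$ is a left-total transition relation (every world has at least one $R$-successor), and $L:W\to 2^{AP}$ is a labelling function. A path is an infinite sequence $\pi=\pi_0\pi_1\cdots$ of worlds with $(\pi_i,\pi_{i+1})\in R$ for all $i\in\mathbb N$; $\mathrm{Pth}(w)$ is the set of paths with $\pi_0=w$. A path $\pi$ is a cycle if for every $i\in\mathbb N$ there is $j>i$ with $\pi_j=\pi_0$ (i.e. $\pi_0$ occurs infinitely often in $\pi$); $\mathrm{Cyc}(w)$ is the set of cycles with $\pi_0=w$. Syntax of CTL*$_{cd}$: state formulas $\varphi::=p\mid\neg\varphi\mid\varphi\wedge\varphi\mid\varphi\vee\varphi\mid \mathsf E\psi\mid\mathsf A\psi\mid\mathsf E^{c}\psi\mid\mathsf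 A^{c}\psi$ with $p\in AP$; path formulas $\psi::=\varphi\mid\neg\psi\mid\psi\wedge\psi\mid\psi\vee\psi\mid\mathsf X\psi\mid\psi\,\mathsf U\,\psi$. Semantics: $\mathcal K,w\models p$ iff $p\in L(w)$; Boolean connectives as usual; $\mathcal K,w\models\mathsf E\psi$ iff some $\pi\in\mathrm{Pth}(w)$ has $\mathcal K,\pi,0\models\psi$; $\mathcal K,w\models\mathsf A\psi$ iff every $\pi\in\mathrm{Pth}(w)$ has $\mathcal K,\pi,0\models\psi$; $\mathcal K,w\models\mathsf E^{c}\psi$ iff some $\pi\in\mathrm{Cyc}(w)$ has $\mathcal K,\pi,0\models\psi$; $\mathcal K,w\models\mathsf A^{c}\psi$ iff every $\pi\in\mathrm{Cyc}(w)$ has $\mathcal K,\pi,0\models\psi$. For paths: $\mathcal K,\pi,i\models\varphi$ (state formula) iff $\mathcal K,\pi_i\models\varphi$; Boolean connectives as usual; $\mathcal K,\pi,i\models\mathsf X\psi$ iff $\mathcal K,\pi,i+1\models\psi$; $\mathcal K,\pi,i\models\psi_1\mathsf U\psi_2$ iff there is $k\ge0$ with $\mathcal K,\pi,i+k\models\psi_2$ and $\mathcal K,\pi,i+j\models\psi_1$ for all $0\le j<k$. $\mathcal K\models\varphi$ iff $\mathcal K,w_I\models\varphi$. CTL* is the fragment of CTL*$_{cd}$ without the operators $\mathsf E^c,\mathsf A^c$. The modal $\mu$-calculus is the standard one, interpreted over Kripke structures at the initial world, with $\Box$ the universal successor modality. *)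

(* Defs.v *)
From Stdlib Require Import List.
Set Implicit Arguments.

Record Kripke (AP : Type) : Type := {
  W : Type;
  R : W -> W -> Prop;
  L : W -> AP -> Prop;
  wI : W;
  W_countable : exists f : W -> nat, forall x y, f x = f y -> x = y;
  R_total : forall w, exists v, R w v
}.
Arguments W {AP}. Arguments R {AP}. Arguments L {AP}. Arguments wI {AP}.

Definition is_path {AP} (K : Kripke AP) (pi : nat -> W K) : Prop :=
  forall i, R K (pi i) (pi (S i)).

Definition Pth {AP} (K : Kripke AP) (w : W K) (pi : nat -> W K) : Prop :=
  is_path K pi /\ pi 0 = w.

Definition is_cycle {AP} (K : Kripke AP) (pi : nat -> W K) : Prop :=
  is_path K pi /\ forall i, exists j, i < j /\ pi j = pi 0.

Definition Cyc {AP} (K : Kripke AP) (w : W K) (pi : nat -> W K) : Prop :=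
  is_cycle K pi /\ pi 0 = w.

Inductive sform (AP : Type) : Type :=
| SAtom : AP -> sform AP
| SNeg : sform AP -> sform AP
| SAnd : sform AP -> sform AP -> sform AP
| SOr : sform AP -> sform AP -> sform AP
| SE : pform AP -> sform AP
| SA : pform AP -> sform AP
| SEc : pform AP -> sform AP
| SAc : pform AP -> sform AP
with pform (AP : Type) : Type :=
| PState : sform AP -> pform AP
| PNeg : pform AP -> pform AP
| PAnd : pform AP -> pform AP -> pform AP
| POr : pform AP -> pform AP -> pform AP
| PX : pform AP -> pform AP
| PU : pform AP -> pform AP -> pform AP.

Arguments SAtom {AP}. Arguments SNeg {AP}. Arguments SAnd {AP}. Arguments SOr {AP}.
Arguments SE {AP}. Arguments SA {AP}. Arguments SEc {AP}. Arguments SAc {AP}.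
Arguments PState {AP}. Arguments PNeg {AP}. Arguments PAnd {AP}. Arguments POr {AP}.
Arguments PX {AP}. Arguments PU {AP}.

Fixpoint sat_s {AP} (K : Kripke AP) (w : W K) (f : sform AP) {struct f} : Prop :=
  match f with
  | SAtom p => L K w p
  | SNeg g => ~ sat_s K w g
  | SAnd g h => sat_s K w g /\ sat_s K w h
  | SOr g h => sat_s K w g \/ sat_s K w h
  | SE psi => exists pi, Pth K w pi /\ sat_p K pi 0 psi
  | SA psi => forall pi, Pth K w pi -> sat_p K pi 0 psi
  | SEc psi => exists pi, Cyc K w pi /\ sat_p K pi 0 psi
  | SAc psi => forall pi, Cyc K w pi -> sat_p K pi 0 psi
  end
with sat_p {AP} (K : Kripke AP) (pi : nat -> W K) (i : nat) (psi : pform AP)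
  {struct psi} : Prop :=
  match psi with
  | PState g => sat_s K (pi i) g
  | PNeg a => ~ sat_p K pi i a
  | PAnd a b => sat_p K pi i a /\ sat_p K pi i b
  | POr a b => sat_p K pi i a \/ sat_p K pi i b
  | PX a => sat_p K pi (S i) a
  | PU a b => exists k, sat_p K pi (i + k) b /\
                        forall j, j < k -> sat_p K pi (i + j) a
  end.

Definition models {AP} (K : Kripke AP) (f : sform AP) : Prop := sat_s K (wI K) f.

Fixpoint is_ctls_s {AP} (f : sform AP) : Prop :=
  match f with
  | SAtom _ => True
  | SNeg g => is_ctls_s g
  | SAnd g h | SOr g h => is_ctls_s g /\ is_ctls_s h
  | SE psi | SA psi => is_ctls_p psi
  | SEc _ | SAc _ => False
  end
with is_ctls_p {AP} (psi : pform AP) : Prop :=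
  match psi with
  | PState g => is_ctls_s g
  | PNeg a | PX a => is_ctls_p a
  | PAnd a b | POr a b | PU a b => is_ctls_p a /\ is_ctls_p b
  end.

(** * The modal mu-calculus (negation normal form, variables indexed by nat) *)
Inductive mu (AP : Type) : Type :=
| MVar : nat -> mu AP
| MTrue : mu AP
| MFalse : mu AP
| MAtom : AP -> mu AP
| MNAtom : AP -> mu AP
| MAnd : mu AP -> mu AP -> mu AP
| MOr : mu AP -> mu AP -> mu AP
| MDia : mu AP -> mu AP
| MBox : mu AP -> mu AP
| MMu : nat -> mu AP -> mu AP
| MNu : nat -> mu AP -> mu AP.

Arguments MVar {AP}. Arguments MTrue {AP}. Arguments MFalse {AP}.
Arguments MAtom {AP}. Arguments MNAtom {AP}. Arguments MAnd {AP}. Arguments MOr {AP}.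
Arguments MDia {AP}. Arguments MBox {AP}. Arguments MMu {AP}. Arguments MNu {AP}.

Definition upd {X : Type} (V : nat -> X -> Prop) (x : nat) (S : X -> Prop)
  : nat -> X -> Prop := fun y => if Nat.eqb y x then S else V y.

Fixpoint msem {AP} (K : Kripke AP) (V : nat -> W K -> Prop) (f : mu AP)
  : W K -> Prop :=
  match f with
  | MVar x => V x
  | MTrue => fun _ => True
  | MFalse => fun _ => False
  | MAtom p => fun w => L K w p
  | MNAtom p => fun w => ~ L K w p
  | MAnd a b => fun w => msem K V a w /\ msem K V b w
  | MOr a b => fun w => msem K V a w \/ msem K V b w
  | MDia a => fun w => exists v, R K w v /\ msem K V a v
  | MBox a => fun w => forall v, R K w v -> msem K V a v
  (* least fixpoint = intersection of all pre-fixed points *)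
  | MMu x a => fun w => forall S : W K -> Prop,
                 (forall v, msem K (upd V x S) a v -> S v) -> S w
  (* greatest fixpoint = union of all post-fixed points *)
  | MNu x a => fun w => exists S : W K -> Prop,
                 (forall v, S v -> msem K (upd V x S) a v) /\ S w
  end.

(** K |= chi, at the initial world (free variables denote the empty set) *)
Definition mu_models {AP} (K : Kripke AP) (f : mu AP) : Prop :=
  msem K (fun _ _ => False) f (wI K).

(* Main.v *)
Require Import Defs.
From Stdlib Require Import List Arith Lia Setoid FunctionalExtensionality.

Scheme sform_ind' := Induction for sform Sort Prop
  with pform_ind' := Induction for pform Sort Prop.
Combined Scheme form_mut from sform_ind', pform_ind'.

Definition Loop (AP : Type) : Kripke AP.
Proof.
  refine {| W := unit; R := fun _ _ => True; L := fun _ _ => False; wI := tt |}.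
  - exists (fun _ => 0). intros [] [] _; reflexivity.
  - intros; exists tt; exact I.
Defined.

Definition Chain (AP : Type) : Kripke AP.
Proof.
  refine {| W := nat; R := fun i j => j = S i; L := fun _ _ => False; wI := 0 |}.
  - exists (fun x => x). auto.
  - intros w; exists (S w); reflexivity.
Defined.

Definition nxt (w : option nat) : option nat :=
  match w with Some (S j) => Some j | _ => None end.

Definition mkJ (AP : Type) (x : option nat) : Kripke AP.
Proof.
  refine {| W := option nat; R := fun w v => v = nxt w;
            L := fun w _ => w <> Some 0; wI := x |}.
  - exists (fun o => match o with None => 0 | Some n => S n end).
    intros [a|] [b|]; simpl; intro H; congruence.
  - intros w; exists (nxt w); reflexivity.
Defined.

Lemma ctls_pmorph AP (K1 K2 : Kripke AP) (h : W K2 -> W K1)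
  (Hlab : forall w a, L K2 w a <-> L K1 (h w) a)
  (Hforth : forall w v, R K2 w v -> R K1 (h w) (h v))
  (Hlift : forall w pi1, Pth K1 (h w) pi1 ->
      exists pi2, Pth K2 w pi2 /\ (fun i => h (pi2 i)) = pi1) :
  (forall f, is_ctls_s f -> forall w, sat_s K2 w f <-> sat_s K1 (h w) f) /\
  (forall psi, is_ctls_p psi -> forall pi i,
      sat_p K2 pi i psi <-> sat_p K1 (fun k => h (pi k)) i psi).
Proof.
  apply (form_mut AP
    (fun f => is_ctls_s f -> forall w, sat_s K2 w f <-> sat_s K1 (h w) f)
    (fun psi => is_ctls_p psi -> forall pi i,
      sat_p K2 pi i psi <-> sat_p K1 (fun k => h (pi k)) i psi)).
  - intros a _ w. apply Hlab.
  - intros g IH Hc w; simpl in *. specialize (IH Hc w); tauto.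
  - intros g IH g' IH' [Hc Hc'] w; simpl.
    specialize (IH Hc w); specialize (IH' Hc' w); tauto.
  - intros g IH g' IH' [Hc Hc'] w; simpl.
    specialize (IH Hc w); specialize (IH' Hc' w); tauto.
  - intros psi IH Hc w; simpl in *; split.
    + intros [pi [[Hp1 Hp2] Hs]]. exists (fun k => h (pi k)). split.
      * split. intro i; apply Hforth, Hp1. simpl; rewrite Hp2; reflexivity.
      * apply (IH Hc pi 0); exact Hs.
    + intros [pi1 [Hp Hs]]. destruct (Hlift w pi1 Hp) as [pi2 [Hp2 Heq]].
      exists pi2. split; auto. apply (IH Hc pi2 0). rewrite Heq. exact Hs.
  - intros psi IH Hc w; simpl in *; split.
    + intros H pi1 Hp. destruct (Hlift _ _ Hp) as [pi2 [Hp2 Heq]].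
      rewrite <- Heq. apply (IH Hc pi2 0). apply H, Hp2.
    + intros H pi [Hp1 Hp2]. apply (IH Hc pi 0). apply H. split.
      intro i; apply Hforth, Hp1. simpl; rewrite Hp2; reflexivity.
  - intros psi _ Hc; destruct Hc.
  - intros psi _ Hc; destruct Hc.
  - intros g IH Hc pi i; simpl in *; apply IH; exact Hc.
  - intros a IH Hc pi i; simpl in *; specialize (IH Hc pi i); tauto.
  - intros a IH b IH' [Hc Hc'] pi i; simpl.
    specialize (IH Hc pi i); specialize (IH' Hc' pi i); tauto.
  - intros a IH b IH' [Hc Hc'] pi i; simpl.
    specialize (IH Hc pi i); specialize (IH' Hc' pi i); tauto.
  - intros a IH Hc pi i; simpl in *; apply IH; exact Hc.
  - intros a IHa b IHb [Ha Hb] pi i; simpl.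
    split; intros [k [H1 H2]]; exists k; split.
    + apply (IHb Hb); auto.
    + intros j Hj; apply (IHa Ha); auto.
    + apply (IHb Hb); auto.
    + intros j Hj; apply (IHa Ha); auto.
Qed.

Lemma msem_mono AP (K : Kripke AP) (f : mu AP) : forall V V',
  (forall x w, V x w -> V' x w) -> forall w, msem K V f w -> msem K V' f w.
Proof.
  induction f; intros V V' HV w; simpl; auto.
  - intros [H1 H2]; split; [eapply IHf1|eapply IHf2]; eauto.
  - intros [H1|H2]; [left; eapply IHf1|right; eapply IHf2]; eauto.
  - intros [v [Hr Hv]]; exists v; split; auto; eapply IHf; eauto.
  - intros H v Hr; eapply IHf; eauto.
  - intros H X HX. apply H. intros v Hv. apply HX.
    eapply IHf; [|exact Hv]. intros y u. unfold upd. destruct (Nat.eqb y n); auto.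
  - intros [X [HX Hw]]. exists X; split; auto. intros v Hv.
    eapply IHf; [|apply HX; exact Hv]. intros y u. unfold upd.
    destruct (Nat.eqb y n); auto.
Qed.

Lemma mu_pmorph AP (K1 K2 : Kripke AP) (h : W K2 -> W K1)
  (Hlab : forall w a, L K2 w a <-> L K1 (h w) a)
  (Hforth : forall w v, R K2 w v -> R K1 (h w) (h v))
  (Hback : forall w u, R K1 (h w) u -> exists v, R K2 w v /\ h v = u)
  (f : mu AP) : forall V1 V2, (forall x w, V2 x w <-> V1 x (h w)) ->
  forall w, msem K2 V2 f w <-> msem K1 V1 f (h w).
Proof.
  induction f; intros V1 V2 HV w; simpl.
  - apply HV.
  - tauto.
  - tauto.
  - apply Hlab.
  - specialize (Hlab w a); tauto.
  - specialize (IHf1 V1 V2 HV w); specialize (IHf2 V1 V2 HV w); tauto.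
  - specialize (IHf1 V1 V2 HV w); specialize (IHf2 V1 V2 HV w); tauto.
  - split.
    + intros [v [Hr Hv]]. exists (h v). split; auto. apply (IHf V1 V2 HV v); auto.
    + intros [u [Hr Hu]]. destruct (Hback _ _ Hr) as [v [Hr' Hv]]. subst u.
      exists v; split; auto. apply (IHf V1 V2 HV v); auto.
  - split.
    + intros H u Hr. destruct (Hback _ _ Hr) as [v [Hr' Hv]]. subst u.
      apply (IHf V1 V2 HV v); auto.
    + intros H v Hr. apply (IHf V1 V2 HV v); auto.
  - assert (Hupd : forall X1 X2, (forall u, X2 u <-> X1 (h u)) ->
              forall y u, upd V2 n X2 y u <-> upd V1 n X1 y (h u)).
    { intros X1 X2 HX y u; unfold upd; destruct (Nat.eqb y n); auto. }
    split.
    + intros H X1 HX1. apply (H (fun u => X1 (h u))). intros v Hv. apply HX1.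
      apply (IHf (upd V1 n X1) (upd V2 n (fun u => X1 (h u)))); auto.
      apply Hupd; tauto.
    + intros H X2 HX2.
      apply (H (fun u => forall w', h w' = u -> X2 w')); [|reflexivity].
      intros u Hu w' Hw'. subst u. apply HX2.
      eapply msem_mono; [|apply (IHf (upd V1 n (fun u => forall w', h w' = u -> X2 w'))
                                (upd V2 n (fun u => forall w', h w' = h u -> X2 w'))); 
                         [apply Hupd; tauto| exact Hu]].
      intros y u. unfold upd. destruct (Nat.eqb y n); auto.
  - assert (Hupd : forall X1 X2, (forall u, X2 u <-> X1 (h u)) ->
              forall y u, upd V2 n X2 y u <-> upd V1 n X1 y (h u)).
    { intros X1 X2 HX y u; unfold upd; destruct (Nat.eqb y n); auto. }
    split.
    + intros [X2 [HX2 Hw]].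
      exists (fun u => exists w', h w' = u /\ X2 w'). split; [|exists w; auto].
      intros u [w' [Hw' Hx]]. subst u.
      apply (IHf (upd V1 n (fun u => exists w', h w' = u /\ X2 w'))
                 (upd V2 n (fun u => exists w', h w' = h u /\ X2 w'))).
      * apply Hupd; tauto.
      * eapply msem_mono; [|apply HX2; exact Hx].
        intros y u. unfold upd. destruct (Nat.eqb y n); eauto.
    + intros [X1 [HX1 Hw]]. exists (fun u => X1 (h u)). split; auto.
      intros v Hv. apply (IHf (upd V1 n X1) (upd V2 n (fun u => X1 (h u)))).
      * apply Hupd; tauto.
      * apply HX1; exact Hv.
Qed.

Definition cp (w : option nat) (k : nat) : option nat := Nat.iter k nxt w.

Lemma suffix AP (K : Kripke AP) psi : forall pi i k,
  sat_p K pi (i + k) psi <-> sat_p K (fun m => pi (i + m)) k psi.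
Proof.
  induction psi; intros pi i k; simpl.
  - reflexivity.
  - specialize (IHpsi pi i k); tauto.
  - specialize (IHpsi1 pi i k); specialize (IHpsi2 pi i k); tauto.
  - specialize (IHpsi1 pi i k); specialize (IHpsi2 pi i k); tauto.
  - rewrite <- Nat.add_succ_r. apply IHpsi.
  - split; intros [k' [H1 H2]]; exists k'; split.
    + apply (proj1 (IHpsi2 pi i (k + k'))). rewrite Nat.add_assoc; exact H1.
    + intros j Hj. apply (proj1 (IHpsi1 pi i (k + j))). rewrite Nat.add_assoc; auto.
    + apply (proj2 (IHpsi2 pi i (k + k'))) in H1. rewrite Nat.add_assoc in H1. exact H1.
    + intros j Hj. specialize (H2 j Hj). apply (proj2 (IHpsi1 pi i (k + j))) in H2.
      rewrite Nat.add_assoc in H2. exact H2.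
Qed.

Lemma U_unfold AP (K : Kripke AP) pi i a b :
  sat_p K pi i (PU a b) <-> sat_p K pi i b \/ (sat_p K pi i a /\ sat_p K pi (S i) (PU a b)).
Proof.
  simpl. split.
  - intros [k [Hb Ha]]. destruct k.
    + left; rewrite Nat.add_0_r in Hb; exact Hb.
    + right; split.
      * specialize (Ha 0 ltac:(lia)); rewrite Nat.add_0_r in Ha; exact Ha.
      * exists k; split.
        -- rewrite Nat.add_succ_r in Hb; exact Hb.
        -- intros j Hj; rewrite <- Nat.add_succ_r; apply Ha; lia.
  - intros [Hb | [Ha [k [Hb Hk]]]].
    + exists 0; split; [rewrite Nat.add_0_r; exact Hb | intros; lia].
    + exists (S k); split.
      * rewrite Nat.add_succ_r; exact Hb.
      * intros j Hj; destruct j.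
        -- rewrite Nat.add_0_r; exact Ha.
        -- rewrite Nat.add_succ_r; apply Hk; lia.
Qed.

Lemma cp_shift w i m : cp w (i + m) = cp (cp w i) m.
Proof.
  induction m.
  - rewrite Nat.add_0_r; reflexivity.
  - rewrite Nat.add_succ_r; simpl; rewrite IHm; reflexivity.
Qed.

Lemma cp_Some k : forall j, cp (Some j) k = if k <=? j then Some (j - k) else None.
Proof.
  induction k; intros j.
  - simpl. rewrite Nat.sub_0_r; reflexivity.
  - change (cp (Some j) (S k)) with (nxt (cp (Some j) k)). rewrite IHk.
    destruct (Nat.leb_spec k j); destruct (Nat.leb_spec (S k) j); try lia.
    + replace (j - k) with (S (j - S k)) by lia; reflexivity.
    + replace (j - k) with 0 by lia; reflexivity.
    + reflexivity.
Qed.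

Section JS.
Context (AP : Type) (x : option nat).
Let J := mkJ AP x.

Lemma at_pos psi w k :
  sat_p J (cp w) k psi <-> sat_p J (cp (cp w k)) 0 psi.
Proof.
  pose proof (suffix AP J psi (cp w) k 0) as H. rewrite Nat.add_0_r in H.
  rewrite H.
  assert (Heq : (fun m => cp w (k + m)) = cp (cp w k)).
  { apply functional_extensionality; intro; apply cp_shift. }
  rewrite Heq. reflexivity.
Qed.

Lemma path_unique w pi : Pth J w pi -> pi = cp w.
Proof.
  intros [Hp H0]. apply functional_extensionality. intro k. induction k.
  - exact H0.
  - change (cp w (S k)) with (nxt (cp w k)). rewrite <- IHk. apply Hp.
Qed.

Lemma cp_path w : Pth J w (cp w).
Proof. split; [intro i; reflexivity | reflexivity]. Qed.

Lemma SE_equiv w psi : sat_s J w (SE psi) <-> sat_p J (cp w) 0 psi.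
Proof.
  simpl; split.
  - intros [pi [Hp H]]. rewrite (path_unique w pi Hp) in H; exact H.
  - intros H; exists (cp w); split; [apply cp_path|exact H].
Qed.

Lemma SA_equiv w psi : sat_s J w (SA psi) <-> sat_p J (cp w) 0 psi.
Proof.
  simpl; split.
  - intros H; apply H, cp_path.
  - intros H pi Hp. rewrite (path_unique w pi Hp); exact H.
Qed.

Lemma nocyc j pi : ~ Cyc J (Some j) pi.
Proof.
  intros [[Hp Hc] H0].
  assert (E : pi = cp (Some j)) by (apply path_unique; split; auto).
  destruct (Hc 0) as [k [Hk Hpk]]. rewrite E in Hpk. rewrite !cp_Some in Hpk.
  destruct (Nat.leb_spec k j); destruct (Nat.leb_spec 0 j); try lia;
    try discriminate. injection Hpk; lia.
Qed.

Lemma PX_equiv w a : sat_p J (cp w) 0 (PX a) <-> sat_p J (cp (nxt w)) 0 a.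
Proof. simpl. exact (at_pos a w 1). Qed.

Lemma PU_equiv w a b : sat_p J (cp w) 0 (PU a b) <->
  sat_p J (cp w) 0 b \/ (sat_p J (cp w) 0 a /\ sat_p J (cp (nxt w)) 0 (PU a b)).
Proof.
  rewrite U_unfold. rewrite (at_pos (PU a b) w 1). reflexivity.
Qed.

Definition ECs (P : nat -> Prop) := exists N, forall j, N <= j -> (P (S j) <-> P j).

Lemma J_ec : (forall f, ECs (fun j => sat_s J (Some j) f)) /\
             (forall psi, ECs (fun j => sat_p J (cp (Some j)) 0 psi)).
Proof.
  apply (form_mut AP (fun f => ECs (fun j => sat_s J (Some j) f))
                     (fun psi => ECs (fun j => sat_p J (cp (Some j)) 0 psi))).
  - intros a. exists 1; intros j Hj; simpl. split; intros _ H; injection H; lia.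
  - intros g [N H]; exists N; intros j Hj; specialize (H j Hj); simpl; tauto.
  - intros g [N H] g' [N' H']; exists (max N N'); intros j Hj;
      specialize (H j ltac:(lia)); specialize (H' j ltac:(lia)); simpl; tauto.
  - intros g [N H] g' [N' H']; exists (max N N'); intros j Hj;
      specialize (H j ltac:(lia)); specialize (H' j ltac:(lia)); simpl; tauto.
  - intros psi [N H]; exists N; intros j Hj. rewrite !SE_equiv. apply H; auto.
  - intros psi [N H]; exists N; intros j Hj. rewrite !SA_equiv. apply H; auto.
  - intros psi _; exists 0; intros j _; simpl; split;
      intros [pi [Hc _]]; exfalso; eapply nocyc; eauto.
  - intros psi _; exists 0; intros j _; simpl; split;
      intros _ pi Hc; exfalso; eapply nocyc; eauto.
  - intros g [N H]; exists N; exact H.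
  - intros g [N H]; exists N; intros j Hj; specialize (H j Hj); simpl; tauto.
  - intros g [N H] g' [N' H']; exists (max N N'); intros j Hj;
      specialize (H j ltac:(lia)); specialize (H' j ltac:(lia)); simpl; tauto.
  - intros g [N H] g' [N' H']; exists (max N N'); intros j Hj;
      specialize (H j ltac:(lia)); specialize (H' j ltac:(lia)); simpl; tauto.
  - intros a [N H]; exists (S N); intros j Hj. rewrite !PX_equiv.
    destruct j as [|j']; [lia|]. apply H; lia.
  - intros a [Na Ha] b [Nb Hb]; exists (max Na Nb); intros j Hj.
    pose proof (PU_equiv (Some (S j)) a b) as E1.
    pose proof (PU_equiv (Some j) a b) as E2.
    change (nxt (Some (S j))) with (Some j) in E1.
    specialize (Ha j ltac:(lia)); specialize (Hb j ltac:(lia)); tauto.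
Qed.

End JS.

Lemma J_transfer AP x y :
  (forall f w, sat_s (mkJ AP x) w f <-> sat_s (mkJ AP y) w f) /\
  (forall psi pi i, sat_p (mkJ AP x) pi i psi <-> sat_p (mkJ AP y) pi i psi).
Proof.
  apply (form_mut AP (fun f => forall w, sat_s (mkJ AP x) w f <-> sat_s (mkJ AP y) w f)
     (fun psi => forall pi i, sat_p (mkJ AP x) pi i psi <-> sat_p (mkJ AP y) pi i psi));
  intros; simpl.
  all: try (match goal with H : _ |- _ => solve [firstorder] end).
Qed.

Definition chi_even (AP : Type) (p : AP) : mu AP :=
  MNu 0 (MAnd (MAtom p) (MBox (MBox (MVar 0)))).

Lemma odd_true AP (p : AP) k : mu_models (mkJ AP (Some (2 * k + 1))) (chi_even AP p).
Proof.
  unfold mu_models; simpl.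
  exists (fun w : option nat => w = None \/ exists i, w = Some (2 * i + 1)). split.
  - intros v Hv. destruct Hv as [-> | [i ->]].
    + split; [discriminate|]. intros v1 -> v2 ->. left; reflexivity.
    + split; [intro H; injection H; lia|]. intros v1 -> v2 ->.
      destruct i as [|i'].
      * left; reflexivity.
      * replace (2 * S i' + 1) with (S (S (2 * i' + 1))) by lia.
        right; exists i'; reflexivity.
  - right; exists k; reflexivity.
Qed.

Lemma even_false AP (p : AP) k : ~ mu_models (mkJ AP (Some (2 * k))) (chi_even AP p).
Proof.
  unfold mu_models; simpl. intros [X [Hpost HX]]. revert HX. induction k; intro HX.
  - destruct (Hpost _ HX) as [Hl _]. apply Hl; reflexivity.
  - apply IHk. destruct (Hpost _ HX) as [_ Hb].
    specialize (Hb _ eq_refl _ eq_refl).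
    replace (S k + (S k + 0)) with (S (S (k + (k + 0)))) in Hb by lia. exact Hb.
Qed.

Theorem mainTheorem6 (AP : Type) (AP_finite : exists l : list AP, forall a, In a l)
  (p : AP) :
  (* (1) CTL*_cd is strictly more expressive than CTL* (CTL* is a syntactic fragment) *)
  (exists phi : sform AP, forall chi : sform AP, is_ctls_s chi ->
      ~ (forall K : Kripke AP, models K phi <-> models K chi))
  /\
  (* (2) some CTL*_cd formula is not equivalent to any mu-calculus formula *)
  (exists phi : sform AP, forall chi : mu AP,
      ~ (forall K : Kripke AP, models K phi <-> mu_models K chi))
  /\
  (* (3) some mu-calculus formula is not equivalent to any CTL*_cd formula *)
  (exists chi : mu AP, forall phi : sform AP,
      ~ (forall K : Kripke AP, mu_models K chi <-> models K phi)).
Proof.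
  set (T := SOr (SAtom p) (SNeg (SAtom p))).
  set (phi := SEc (PState T)).
  assert (Hloop : models (Loop AP) phi).
  { unfold models; simpl. exists (fun _ => tt). split.
    - split; [split|reflexivity].
      + intro; exact I.
      + intro i; exists (S i); split; [lia|reflexivity].
    - simpl. right. intro H; exact H. }
  assert (Hchain : ~ models (Chain AP) phi).
  { unfold models; simpl. intros [pi [[[Hp Hc] H0] _]].
    assert (Hk : forall k, pi k = k).
    { induction k; [exact H0|]. rewrite (Hp k), IHk; reflexivity. }
    destruct (Hc 0) as [j [Hj Hj']]. rewrite !Hk in Hj'. lia. }
  set (h := (fun _ : nat => tt) : W (Chain AP) -> W (Loop AP)).
  assert (Hlab : forall w a, L (Chain AP) w a <-> L (Loop AP) (h w) a) by (simpl; tauto).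
  assert (Hforth : forall w v, R (Chain AP) w v -> R (Loop AP) (h w) (h v))
    by (simpl; auto).
  split; [|split].
  - exists phi. intros chi Hc Heq.
    destruct (ctls_pmorph AP (Loop AP) (Chain AP) h Hlab Hforth) as [Hs _].
    + intros w pi1 Hp. exists (fun i => w + i). split.
      * split; [intro i; simpl; lia | simpl; lia].
      * apply functional_extensionality; intro i. unfold h. destruct (pi1 i); reflexivity.
    + apply Hchain. apply Heq. apply (proj2 (Hs chi Hc 0)). apply Heq. exact Hloop.
  - exists phi. intros chi Heq.
    assert (Hm : forall V1 V2, (forall x w, V2 x w <-> V1 x (h w)) ->
              forall w, msem (Chain AP) V2 chi w <-> msem (Loop AP) V1 chi (h w)).
    { apply mu_pmorph; auto. intros w u _. exists (S w); split; [reflexivity|].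
      destruct u; reflexivity. }
    apply Hchain. apply Heq. unfold mu_models.
    apply (proj2 (Hm (fun _ _ => False) (fun _ _ => False) ltac:(tauto) 0)).
    apply (Heq (Loop AP)). exact Hloop.
  - exists (chi_even AP p). intros f Heq.
    destruct (J_ec AP None) as [Hs _]. destruct (Hs f) as [N HN].
    assert (Hc : forall d, sat_s (mkJ AP None) (Some (N + d)) f <->
                           sat_s (mkJ AP None) (Some N) f).
    { induction d.
      - rewrite Nat.add_0_r; tauto.
      - rewrite Nat.add_succ_r. specialize (HN (N + d) ltac:(lia)). tauto. }
    apply (even_false AP p N). apply Heq.
    pose proof (odd_true AP p N) as Ho. apply Heq in Ho. unfold models in *.
    simpl wI in *.
    apply (proj1 (J_transfer AP None (Some (2 * N))) f).
    apply (proj2 (proj1 (J_transfer AP None (Some (2 * N + 1))) f _)) in Ho.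
    replace (N + (N + 0)) with (N + N) by lia.
    replace (N + (N + 0) + 1) with (N + S N) in Ho by lia.
    apply Hc. apply Hc in Ho. exact Ho.
Qed.
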